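(* Let $p$ be a prime number, $G$ a transitive group of degree a power of $p$, $H$ a corresponding subgroup of $G$, and $\mathcal{D}$ an admissible set of subgroups of $G$. Consider a subgroup $G_{1}$ of $G$ that contains a $p$-Sylow subgroup of $G$. (i) There is an isomorphism of $G_{1}$-lattices $J_{G/H}\cong J_{G_{1}/(G_{1}\cap H)}$. (ii) The homomorphism $\operatorname{Res}_{G/G_{1}}\colon \text{Ш}_{\mathcal{D}}^{2}(G,J_{G/H})\rightarrow \text{Ш}_{\mathcal{D}_{\cap G_{1}}}^{2}(G_{1},J_{G_{1}/(G_{1}\cap H)})$ is injective, where $\mathcal{D}_{\cap G_1}:=\{D\cap G_1\mid D\in\mathcal{D}\}$.
   Context: A transitive group of degree $n$ is a subgroup of $\mathfrak{S}_n$ acting transitively on $\mathbb{Z}/n$; a corresponding subgroup is $G\cap\mathrm{Stab}_{\mathfrak{S}_n}(i)$. $J_{G/H}$ is defined by $0\to\mathbb{Z}\to\operatorname{Ind}_H^G\mathbb{Z}\to J_{G/H}\to0$. For a set $\mathcal{D}$ of subgroups, $\text{Ш}^2_{\mathcal{D}}(G,M):=\ker\big(H^2(G,M)\to\bigoplus_{D\in\mathcal{D}}H^2(D,M)\big)$; $\mathcal{D}$ is admissible if it contains all cyclic subgroups of $G$ and is closed under conjugation. *)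

(* Defs.v *)
From mathcomp Require Import all_boot all_order all_algebra all_fingroup all_solvable.
Set Implicit Arguments. Unset Strict Implicit. Unset Printing Implicit Defensive.
Import GRing.Theory.
Local Open Scope ring_scope.
Local Open Scope group_scope.

(* Ind_L^K Z = Z[K/L] is modelled as integer-valued functions on the
   right cosets (rcosets L K), i.e. on {set gT} but only the values on
   rcosets L K matter; K acts on the left by (g . f)(C) = f (C :* g)%g.
   J_{K/L} = Z[K/L] / Z.N where N = sum of all cosets (the constant
   function 1): two functions represent the same element of J_{K/L}
   iff they differ by a constant on rcosets L K. *)
Section J.
Variable gT : finGroupType.
Notation elt := ({set gT} -> int).

Definition Jeq (K L : {set gT}) (f f' : elt) : Prop :=
  exists c : int, forall C, C \in rcosets L K -> (f C - f' C = c)%R.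

Definition Jact (g : gT) (f : elt) : elt := fun C => f (C :* g)%g.

Definition Jadd (f f' : elt) : elt := fun C => (f C + f' C)%R.
Definition Jzero : elt := fun _ => 0%R.

Definition Jiso (A K L K' L' : {set gT}) (phi : elt -> elt) : Prop :=
  [/\ forall f f', Jeq K L f f' -> Jeq K' L' (phi f) (phi f'),
      forall f f', Jeq K' L' (phi (Jadd f f')) (Jadd (phi f) (phi f')),
      forall g f, g \in A -> Jeq K' L' (phi (Jact g f)) (Jact g (phi f)),
      forall f f', Jeq K' L' (phi f) (phi f') -> Jeq K L f f'
    & forall f', exists f, Jeq K' L' (phi f) f'].

Definition cochain2 := gT -> gT -> elt.

Definition cocycle2 (K L A : {set gT}) (c : cochain2) : Prop :=
  forall g h k, g \in A -> h \in A -> k \in A ->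
    Jeq K L (fun C => (c h k (C :* g)%g - c (g * h)%g k C + c g (h * k)%g C
                       - c g h C)%R) Jzero.

Definition coboundary2 (K L A : {set gT}) (c : cochain2) : Prop :=
  exists b : gT -> elt, forall g h, g \in A -> h \in A ->
    Jeq K L (c g h) (fun C => (b h (C :* g)%g - b (g * h)%g C + b g C)%R).

(* A cocycle representing a class in Sha^2_D(G, J_{G/H}) :=
   ker (H^2(G,J) -> prod_{D in D} H^2(D,J)). *)
Definition sha2_cocycle (G H : {set gT}) (D : {set {group gT}})
    (c : cochain2) : Prop :=
  cocycle2 G H G c /\ forall Dg : {group gT}, Dg \in D -> coboundary2 G H Dg c.

Definition admissible (G : {set gT}) (D : {set {group gT}}) : Prop :=
  [/\ forall Dg : {group gT}, Dg \in D -> Dg \subset G,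
      forall x, x \in G -> <[x]>%G \in D
    & forall (Dg : {group gT}) x, Dg \in D -> x \in G -> (Dg :^ x)%G \in D].

End J.

(* Main.v *)
Require Import Defs.
From mathcomp Require Import all_boot all_order all_algebra all_fingroup all_solvable.
Local Open Scope group_scope.
From mathcomp Require Import zify ring.
From Stdlib Require Import ClassicalEpsilon.
Set Implicit Arguments. Unset Strict Implicit. Unset Printing Implicit Defensive.
Import GRing.Theory.

Section JBasic.
Variable gT : finGroupType.
Implicit Types K L : {group gT}.
Notation elt := ({set gT} -> int).

Definition Jopp (f : elt) : elt := fun C => (- f C)%R.
Definition Jsub (f f' : elt) : elt := fun C => (f C - f' C)%R.
Definition Jscale (z : int) (f : elt) : elt := fun C => (z * f C)%R.

Lemma Jeq_refl K L f : Jeq K L f f.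
Proof. by exists 0%R => C _; rewrite GRing.subrr. Qed.

Lemma Jeq_ext K L f f' : (forall C, C \in rcosets L K -> f C = f' C) -> Jeq K L f f'.
Proof. by move=> e; exists 0%R => C /e ->; rewrite GRing.subrr. Qed.

Lemma Jeq_sym K L f f' : Jeq K L f f' -> Jeq K L f' f.
Proof. by case=> c e; exists (- c)%R => C /e <-; lia. Qed.

Lemma Jeq_trans K L f1 f2 f3 : Jeq K L f1 f2 -> Jeq K L f2 f3 -> Jeq K L f1 f3.
Proof. by case=> c e [c' e']; exists (c + c')%R => C HC; rewrite -(e C HC) -(e' C HC); lia. Qed.

Lemma Jeq_add K L f1 f2 f1' f2' : Jeq K L f1 f1' -> Jeq K L f2 f2' ->
  Jeq K L (Jadd f1 f2) (Jadd f1' f2').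
Proof. by case=> c e [c' e']; exists (c + c')%R => C HC; rewrite /Jadd -(e C HC) -(e' C HC); lia. Qed.

Lemma Jeq_sub K L f1 f2 f1' f2' : Jeq K L f1 f1' -> Jeq K L f2 f2' ->
  Jeq K L (Jsub f1 f2) (Jsub f1' f2').
Proof. by case=> c e [c' e']; exists (c - c')%R => C HC; rewrite /Jsub -(e C HC) -(e' C HC); lia. Qed.

Lemma Jeq_opp K L f1 f1' : Jeq K L f1 f1' -> Jeq K L (Jopp f1) (Jopp f1').
Proof. by case=> c e; exists (- c)%R => C HC; rewrite /Jopp -(e C HC); lia. Qed.

Lemma Jeq_scale K L z f1 f1' : Jeq K L f1 f1' -> Jeq K L (Jscale z f1) (Jscale z f1').
Proof. by case=> c e; exists (z * c)%R => C HC; rewrite /Jscale -(e C HC); ring. Qed.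

Lemma rcosets_act K L C g : C \in rcosets L K -> g \in K -> C :* g \in rcosets L K.
Proof.
case/rcosetsP=> x Kx -> Kg; apply/rcosetsP; exists (x * g); first by rewrite groupM.
by rewrite rcosetM.
Qed.

Lemma Jeq_act K L g f1 f1' : g \in K -> Jeq K L f1 f1' -> Jeq K L (Jact g f1) (Jact g f1').
Proof. by move=> Kg [c e]; exists c => C HC; rewrite /Jact e // rcosets_act. Qed.

Lemma L_in_rcosets K L : (L : {set gT}) \in rcosets L K.
Proof. by apply/rcosetsP; exists 1; rewrite ?group1 ?rcoset1. Qed.

Lemma JeqE K L f f' : Jeq K L f f' <->
  (forall C, C \in rcosets L K -> (f C - f' C = f L - f' L)%R).
Proof.
split; last by move=> h; exists (f L - f' L)%R.
by case=> c e C HC; rewrite e // e // L_in_rcosets.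
Qed.

Lemma Jeq_sum K L (I : finType) (P : pred I) (F F' : I -> elt) :
  (forall i, P i -> Jeq K L (F i) (F' i)) ->
  Jeq K L (fun C => \sum_(i | P i) F i C)%R (fun C => \sum_(i | P i) F' i C)%R.
Proof.
move=> e; apply/JeqE => C HC; rewrite -!GRing.sumrB; apply: eq_bigr => i Pi.
by move/JeqE: (e i Pi); apply.
Qed.

End JBasic.

Lemma sum4 (I : finType) (P : {pred I}) (a b c d : I -> int) :
  (\sum_(i in P) (a i - b i + c i - d i) =
  \sum_(i in P) a i - \sum_(i in P) b i + \sum_(i in P) c i - \sum_(i in P) d i)%R.
Proof. by rewrite GRing.sumrB big_split /= GRing.sumrB. Qed.

Lemma sum2 (I : finType) (P : {pred I}) (a b : I -> int) :
  (\sum_(i in P) (a i - b i) = \sum_(i in P) a i - \sum_(i in P) b i)%R.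
Proof. by rewrite GRing.sumrB. Qed.



Ltac gen2 f := repeat match goal with |- context [f ?x ?y] =>
  let a := fresh "a" in set a := (f x y); clearbody a end.
Ltac gen3 f := repeat match goal with |- context [f ?x ?y ?z] =>
  let a := fresh "a" in set a := (f x y z); clearbody a end.

Ltac clear_noint := repeat match goal with H : @eq ?T _ _ |- _ =>
  assert_fails (unify T int); clear H end.
Ltac clia := clear_noint; lia.

Section Transfer.
Variable gT : finGroupType.
Variables G H : {group gT}.
Notation elt := ({set gT} -> int).
Notation "f ~= f'" := (Jeq G H f f') (at level 70).
Notation X := (rcosets H G).

Definition db (b : gT -> elt) g h : elt :=
  fun C => (b h (C :* g) - b (g * h)%g C + b g C)%R.
Definition dc2 (c : cochain2 gT) g h k : elt :=
  fun C => (c h k (C :* g) - c (g * h)%g k C + c g (h * k)%g C - c g h C)%R.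

Lemma cocycle_sub_db c B : cocycle2 G H G c ->
  cocycle2 G H G (fun g h => Jsub (c g h) (db B g h)).
Proof.
move=> cc g h k Gg Gh Gk; move/JeqE: (cc g h k Gg Gh Gk) => e.
apply/JeqE => C HC; have := e C HC; rewrite /Jsub /db /Jzero -!rcosetM !mulgA.
gen3 c; gen2 B; lia.
Qed.

Definition tau (K : {group gT}) x := repr (x *: K).
Definition kap (K : {group gT}) x := (tau K x)^-1 * x.

Lemma tau_facts (K : {group gT}) x : K \subset G -> x \in G ->
  [/\ tau K x \in G, kap K x \in K & tau K x * kap K x = x].
Proof.
move=> sKG Gx; have : tau K x \in x *: K by apply: mem_repr (lcoset_refl _ _).
case/lcosetP=> a Ka e; rewrite /kap e.
split; first by rewrite groupM // (subsetP sKG).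
  by rewrite invMg -mulgA mulVg mulg1 groupV.
by rewrite mulgA mulgV mul1g.
Qed.

Lemma tauM (K : {group gT}) x k : k \in K -> tau K (x * k) = tau K x.
Proof. by move=> Kk; rewrite /tau lcosetM lcoset_id. Qed.

Lemma tau1 (K : {group gT}) k : k \in K -> tau K k = 1.
Proof. by move=> Kk; rewrite /tau lcoset_id // repr_group. Qed.

Lemma normalize_cocycle (K : {group gT}) c : K \subset G -> cocycle2 G H G c ->
  (forall k k', k \in K -> k' \in K -> c k k' ~= (@Jzero gT)) ->
  exists B, forall x k, x \in G -> k \in K -> Jsub (c x k) (db B x k) ~= (@Jzero gT).
Proof.
move=> sKG cc c0.
exists (fun x => Jopp (c (tau K x) (kap K x))) => x k Gx Kk.
have Gk : k \in G by apply: (subsetP sKG).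
have [Gt Kkap ex] := tau_facts sKG Gx.
have Gkap : kap K x \in G by apply: (subsetP sKG).
move/JeqE: (cc _ _ _ Gt Gkap Gk); rewrite ex => e1.
move/JeqE: (Jeq_act Gt (c0 _ _ Kkap Kk)) => e2.
move/JeqE: (Jeq_act Gx (c0 _ _ (group1 K) Kk)) => e3.
have t1 := tau1 Kk; have txk := tauM x Kk.
have kxk : kap K (x * k) = kap K x * k by rewrite /kap txk mulgA.
have k1 : kap K k = k by rewrite /kap t1 invg1 mul1g.
apply/JeqE => C HC; move: (e1 C HC) (e2 C HC) (e3 C HC).
rewrite /Jsub /db /Jopp /Jact /Jzero t1 txk kxk k1.
gen3 c. move=> q1 q2 q3. rewrite !subr0 in q1 q2 q3 *. clia.
Qed.

Lemma repr_lcosets (K : {group gT}) L0 : K \subset G -> L0 \in lcosets K G ->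
  repr L0 \in G /\ L0 = repr L0 *: K.
Proof.
move=> sKG /lcosetsP[y Gy ->].
have : repr (y *: K) \in y *: K by apply: mem_repr (lcoset_refl _ _).
case/lcosetP=> a Ka ->; split; first by rewrite groupM // (subsetP sKG).
by rewrite lcosetM (lcoset_id Ka).
Qed.

Lemma lcosets_act (K : {group gT}) h : h \in G ->
  [set h *: L0 | L0 in lcosets K G] = lcosets K G.
Proof.
move=> Gh; apply/setP => L0; apply/imsetP/lcosetsP.
  by case=> L1 /lcosetsP[y Gy ->] ->; exists (h * y); rewrite ?groupM ?lcosetM.
case=> y Gy ->; exists ((h^-1 * y) *: K); last by rewrite -lcosetM mulKVg.
by apply/lcosetsP; exists (h^-1 * y); rewrite ?groupM ?groupV.
Qed.

Lemma average_cocycle (K : {group gT}) c : K \subset G -> cocycle2 G H G c ->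
  (forall x k, x \in G -> k \in K -> c x k ~= (@Jzero gT)) ->
  forall g h, g \in G -> h \in G ->
  Jscale #|G : K|%:Z (c g h) ~=
  db (fun g C => \sum_(L0 in lcosets K G) c g (repr L0) C)%R g h.
Proof.
move=> sKG cc c0 g h Gg Gh.
pose T := lcosets K G.
have E1 : (fun C => \sum_(L0 in T) dc2 c g h (repr L0) C)%R ~=
          (fun C => \sum_(L0 in T) (@Jzero gT) C)%R.
  apply: Jeq_sum => L0 /(repr_lcosets sKG)[Gt _]; exact: cc.
have E2 : (fun C => \sum_(L0 in T) c g (h * repr L0)%g C)%R ~=
          (fun C => \sum_(L0 in T) c g (repr (h *: L0)%g) C)%R.
  apply: Jeq_sum => L0 TL0.
  have [Gt eL0] := repr_lcosets sKG TL0.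
  have ThL : h *: L0 \in T by rewrite /T -(lcosets_act K Gh); apply: imset_f.
  have [Gt' eL1] := repr_lcosets sKG ThL.
  set t := repr L0 in Gt eL0 *; set t' := repr (h *: L0) in Gt' eL1 *.
  have Kk : t'^-1 * (h * t) \in K.
    have : h * t \in h *: L0 by rewrite eL0 -lcosetM; apply: lcoset_refl.
    by rewrite eL1 mem_lcoset.
  have Gk : t'^-1 * (h * t) \in G by apply: (subsetP sKG).
  have ht : h * t = t' * (t'^-1 * (h * t)) by rewrite mulKVg.
  move/JeqE: (cc _ _ _ Gg Gt' Gk) => e1.
  move/JeqE: (Jeq_act Gg (c0 _ _ Gt' Kk)) => e2.
  move/JeqE: (c0 _ _ (groupM Gg Gt') Kk) => e3.
  apply/JeqE => C HC; move: (e1 C HC) (e2 C HC) (e3 C HC).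
  rewrite /Jact /Jzero -ht; gen3 c; clia.
have E3 : forall C, (\sum_(L0 in T) c g (repr (h *: L0)%g) C = \sum_(L0 in T) c g (repr L0) C)%R.
  move=> C.
  have -> : (\sum_(L0 in T) c g (repr L0) C =
     \sum_(L0 in [set (h *: L1)%g | L1 in T]) c g (repr L0) C)%R by rewrite /T lcosets_act.
  by rewrite [in RHS]big_imset //= => L1 L2 _ _; apply: lcoset_inj.
have E4 : forall C, (\sum_(L0 in T) c g h C = #|G : K|%:Z * c g h C)%R.
  by move=> C; rewrite sumr_const /T card_lcosets -mulr_natl natz.
move/JeqE: E1 => e1; move/JeqE: E2 => e2.
apply/JeqE => C HC; move: (e1 C HC) (e2 C HC).
rewrite /dc2 /db /Jscale /Jzero => q1 q2; rewrite !big1_eq !subr0 !sum4 !E4 in q1; rewrite !E3 in q2.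
rewrite /T in q1 q2; move: q1 q2.
set s1 := (\sum_(i in lcosets K G) c h (repr i) (C :* g))%R.
set s2 := (\sum_(i in lcosets K G) c h (repr i) (H :* g))%R.
set s3 := (\sum_(i in lcosets K G) c (g * h)%g (repr i) C)%R.
set s4 := (\sum_(i in lcosets K G) c (g * h)%g (repr i) H)%R.
set s5 := (\sum_(i in lcosets K G) c g (h * repr i)%g C)%R.
set s6 := (\sum_(i in lcosets K G) c g (h * repr i)%g H)%R.
set s7 := (\sum_(i in lcosets K G) c g (repr i) C)%R.
set s8 := (\sum_(i in lcosets K G) c g (repr i) H)%R.
set p1 := (#|G : K|%:Z * c g h C)%R.
set p2 := (#|G : K|%:Z * c g h H)%R.
clear_noint; lia.
Qed.

Lemma Jtransfer (K : {group gT}) c b : K \subset G -> cocycle2 G H G c ->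
  (forall g h, g \in K -> h \in K -> c g h ~= db b g h) ->
  exists beta, forall g h, g \in G -> h \in G ->
    Jscale #|G : K|%:Z (c g h) ~= db beta g h.
Proof.
move=> sKG cc cb.
pose c1 := fun g h => Jsub (c g h) (db b g h).
have cc1 : cocycle2 G H G c1 := cocycle_sub_db b cc.
have c10 : forall k k', k \in K -> k' \in K -> c1 k k' ~= (@Jzero gT).
  move=> k k' Kk Kk'; move/JeqE: (cb _ _ Kk Kk') => e; apply/JeqE => C HC.
  move: (e C HC); rewrite /c1 /Jsub /Jzero; clia.
have [B hB] := normalize_cocycle sKG cc1 c10.
pose c2 := fun g h => Jsub (c1 g h) (db B g h).
have cc2 : cocycle2 G H G c2 := cocycle_sub_db B cc1.
have avg := average_cocycle sKG cc2 hB.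
set beta := (fun g C => \sum_(L0 in lcosets K G) c2 g (repr L0) C)%R in avg.
pose m := (#|G : K|%:Z)%R.
exists (fun g C => beta g C + m * (b g C + B g C))%R.
move=> g h Gg Gh; move/JeqE: (avg g h Gg Gh) => e; apply/JeqE => C HC; move: (e C HC).
have R : forall D, (Jscale m (c g h) D - db (fun g C => beta g C + m * (b g C + B g C))%R g h D
   = Jscale m (c2 g h) D - db beta g h D)%R.
  by move=> D; rewrite /Jscale /c2 /c1 /Jsub /db; ring.
by rewrite !R.
Qed.

End Transfer.


Section Fixed.
Variable gT : finGroupType.
Variables G H : {group gT}.
Hypothesis sHG : H \subset G.
Notation elt := ({set gT} -> int).
Notation "f ~= f'" := (Jeq G H f f') (at level 70).
Notation X := (rcosets H G).

Variable c : cochain2 gT.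
Hypothesis cc : cocycle2 G H G c.

Definition c0 g h C := (c g h C - c g h H)%R.

Lemma HX : (H : {set gT}) \in X. Proof. exact: L_in_rcosets. Qed.

Lemma sum_translate (F : gT -> int) h : h \in H ->
  (\sum_(x in H) F (h * x)%g = \sum_(x in H) F x)%R.
Proof.
move=> Hh; rewrite [in RHS](reindex_inj (mulgI h)) /=.
by apply: eq_bigl => x; rewrite groupMl.
Qed.

Lemma P0 g h k C : g \in H -> h \in H -> k \in H -> C \in X ->
  (c0 h k (C :* g) - c0 (g * h)%g k C + c0 g (h * k)%g C - c0 g h C = 0)%R.
Proof.
move=> Hg Hh Hk HC.
have sH := subsetP sHG.
move/JeqE: (cc (sH g Hg) (sH h Hh) (sH k Hk)) => e.
move: (e C HC); rewrite /c0 /Jzero rcoset_id //; gen3 c; clia.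
Qed.

Definition beta g C := (\sum_(x in H) c0 g x C)%R.
Definition N : int := #|H|%:Z.

Lemma P1 g h C : g \in H -> h \in H -> C \in X ->
  (N * c0 g h C = beta h (C :* g) - beta (g * h)%g C + beta g C)%R.
Proof.
move=> Hg Hh HC.
have S : (\sum_(x in H) (c0 h x (C :* g) - c0 (g * h)%g x C + c0 g (h * x)%g C - c0 g h C) = 0)%R.
  by apply: big1 => x Hx; apply: P0.
rewrite sum4 (sum_translate (fun x => c0 g x C) Hh) sumr_const -mulr_natl natz in S.
rewrite /beta /N; move: S; clia.
Qed.

Lemma rcoset_fixX (C0 : {set gT}) (s : gT) j : C0 :* s = C0 -> C0 :* (s ^+ j) = C0.
Proof.
move=> e; elim: j => [|j IH]; first by rewrite expg0 rcoset1.
by rewrite expgSr rcosetM IH e.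
Qed.

Lemma P2 s C0 : s \in H -> C0 \in X -> C0 :* s = C0 ->
  coboundary2 G H <[s]> c -> (N %| beta s C0)%Z.
Proof.
move=> Hs XC0 fix0 [b hb].
have sH := subsetP sHG.
have sSH : <[s]> \subset H by rewrite cycle_subG.
pose b0 g C := (b g C - b g H)%R.
have E2 : forall g h C, g \in <[s]> -> h \in <[s]> -> C \in X ->
    c0 g h C = (b0 h (C :* g) - b0 (g * h)%g C + b0 g C)%R.
  move=> g h C Sg Sh XC; move/JeqE: (hb g h Sg Sh) => e; move: (e C XC).
  rewrite /c0 /b0 rcoset_id ?(subsetP sSH) //; gen3 c; gen2 b; clia.
pose a g C := (beta g C - N * b0 g C)%R.
have Ea : forall g h C, g \in <[s]> -> h \in <[s]> -> C \in X ->
    a (g * h)%g C = (a g C + a h (C :* g))%R.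
  move=> g h C Sg Sh XC; have := P1 (subsetP sSH g Sg) (subsetP sSH h Sh) XC.
  rewrite E2 // /a => /eqP; rewrite -subr_eq0 => /eqP q.
  apply/eqP; rewrite -subr_eq0; apply/eqP; rewrite -q; ring.
have Ej : forall j, a (s ^+ j) C0 = (j%:Z * a s C0)%R.
  elim=> [|j IH].
    have := Ea 1 1 C0 (group1 _) (group1 _) XC0; rewrite mulg1 rcoset1 expg0; clia.
  rewrite expgS Ea ?mem_cycle ?groupX ?cycle_id // fix0 IH.
  by rewrite -addn1 PoszD mulrDl mul1r addrC.
have : (#[s]%:Z * a s C0 = 0)%R.
  rewrite -Ej expg_order.
  have := Ea 1 1 C0 (group1 _) (group1 _) XC0; rewrite mulg1 rcoset1; set z := (a _ C0); clia.
have o := order_gt0 s.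
move=> h0; have : a s C0 = 0%R.
  by move: h0 o; set z := a s C0; set m := #[s]; clear_noint; nia.
rewrite /a => /eqP; rewrite subr_eq0 => /eqP ->; exact: dvdz_mulr (dvdzz _).
Qed.

Definition orbH (C : {set gT}) := [set C :* h | h in H].
Definition rr (C : {set gT}) := odflt set0 [pick D in orbH C].
Definition ww (C : {set gT}) := odflt 1 [pick h in H | C == rr C :* h].

Lemma orbH_refl C : C \in orbH C.
Proof. by apply/imsetP; exists 1; rewrite ?group1 ?rcoset1. Qed.

Lemma rr_in C : rr C \in orbH C.
Proof.
rewrite /rr; case: pickP => [D DC // | none].
by have := none C; rewrite orbH_refl.
Qed.

Lemma orbH_act C g : g \in H -> orbH (C :* g) = orbH C.
Proof.
move=> Hg; apply/setP => D; apply/imsetP/imsetP => [[h Hh ->]|[h Hh ->]].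
  by exists (g * h); rewrite ?groupM ?rcosetM.
by exists (g^-1 * h); rewrite ?groupM ?groupV // -rcosetM mulKVg.
Qed.

Lemma rr_act C g : g \in H -> rr (C :* g) = rr C.
Proof. by move=> Hg; rewrite /rr orbH_act. Qed.

Lemma ww_spec C : ww C \in H /\ C = rr C :* ww C.
Proof.
have /imsetP[h0 Hh0 e0] := rr_in C.
rewrite /ww; case: pickP => [h /andP[Hh /eqP e] // | none].
have := none h0^-1; rewrite groupV Hh0 /= e0 rcosetK eqxx //.
Qed.

Lemma rr_X C : C \in X -> rr C \in X.
Proof.
have /imsetP[h0 Hh0 ->] := rr_in C => XC.
by apply: rcosets_act => //; apply: (subsetP sHG).
Qed.

Lemma fixed_coboundary :
  (forall s, s \in H -> coboundary2 G H <[s]> c) -> coboundary2 G H H c.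
Proof.
move=> cobs.
have Hdiv : forall s C0, s \in H -> C0 \in X -> C0 :* s = C0 -> (N %| beta s C0)%Z.
  by move=> s C0 Hs XC0 f; apply: P2 => //; apply: cobs.
have cong : forall x y D, x \in H -> y \in H -> D \in X ->
    (N %| (beta (x * y)%g D - beta x D - beta y (D :* x))%R)%Z.
  move=> x y D Hx Hy XD; have e := P1 Hx Hy XD.
  apply/dvdzP; exists (- c0 x y D)%R; rewrite mulNr mulrC e; ring.
pose mu C := beta (ww C) (rr C).
have cong2 : forall g C, g \in H -> C \in X -> (N %| (beta g C - (mu (C :* g) - mu C))%R)%Z.
  move=> g C Hg XC.
  have [Hw eC] := ww_spec C; have [Hw' eCg] := ww_spec (C :* g).
  rewrite /mu (rr_act C Hg) in eCg *.
  set r := rr C in eC eCg *; set w := ww C in Hw eC *; set w' := ww (C :* g) in Hw' eCg *.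
  have Xr : r \in X by apply: rr_X.
  set s := (w * g * w'^-1)%g.
  have Hs : s \in H by rewrite !groupM ?groupV.
  have fs : r :* s = r by rewrite /s !rcosetM -eC eCg rcosetK.
  have sw : (s * w')%g = (w * g)%g by rewrite /s mulgKV.
  have d1 := cong w g r Hw Hg Xr; have d2 := cong s w' r Hs Hw' Xr.
  have d3 := Hdiv s r Hs Xr fs.
  rewrite -eC in d1; rewrite fs sw in d2.
  have -> : (beta g C - (beta w' r - beta w r) =
     - (beta (w * g)%g r - beta w r - beta g C) +
       (beta (w * g)%g r - beta s r - beta w' r) + beta s r)%R by ring.
  by apply: rpredD; [apply: rpredD; [rewrite rpredN|] |].
pose B g C := (beta g C - (mu (C :* g) - mu C))%R.
pose b g C := (B g C %/ N)%Z.
exists b => g h Hg Hh.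
have Npos : (0 < N)%R by rewrite /N ltz_nat cardG_gt0.
have Hgh : (g * h)%g \in H by rewrite groupM.
have key : forall D, D \in X -> c0 g h D = db b g h D.
  move=> D XD.
  have XDg : D :* g \in X by apply: rcosets_act => //; apply: (subsetP sHG).
  have e := P1 Hg Hh XD.
  have k1 := divzK (cong2 h _ Hh XDg); have k2 := divzK (cong2 _ _ Hgh XD);
  have k3 := divzK (cong2 g _ Hg XD).
  apply: (@mulfI _ N); first by rewrite Order.POrderTheory.gt_eqF.
  rewrite e /db /b !mulrDr !mulrN ![(N * (_ %/ N)%Z)%R]mulrC k1 k2 k3 /B -rcosetM.
  ring.
apply/JeqE => C XC; have k := key C XC; have k0 := key H HX.
move: k k0; rewrite /c0 /db; gen3 c; gen2 b; clia.
Qed.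

End Fixed.


Section Main.
Variable gT : finGroupType.
Variables G H G1 : {group gT}.
Hypothesis sHG : H \subset G.
Hypothesis sG1G : G1 \subset G.
Hypothesis HG1 : H * G1 = G.

Let H1 := (G1 :&: H)%G.

Lemma sH1H : H1 \subset H. Proof. exact: subsetIr. Qed.

Lemma X1_repr C : C \in rcosets H1 G1 -> exists2 y, y \in G1 & C = H1 :* y.
Proof. by case/rcosetsP=> y Gy ->; exists y. Qed.

Lemma HC_eq y : H * (H1 :* y) = H :* y.
Proof. by rewrite mulgA mulGSid // sH1H. Qed.

Lemma G1_cap y : y \in G1 -> G1 :&: (H :* y) = H1 :* y.
Proof.
move=> Gy; apply/setP => x; rewrite inE !mem_rcoset inE.
by rewrite -(groupMr _ (groupVr Gy)).
Qed.

Lemma HG1_rep x : x \in G -> exists2 y, y \in G1 & H :* x = H :* y.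
Proof.
rewrite -HG1 => /mulsgP[h y Hh Gy ->]; exists y => //.
by rewrite rcosetM rcoset_id.
Qed.

Definition phi0 (f : {set gT} -> int) : {set gT} -> int := fun C => f (H * C).

Lemma part1 : Jiso G1 G H G1 H1 phi0.
Proof.
split.
- move=> f f' [c e]; exists c => C /X1_repr[y Gy ->]; rewrite /phi0 HC_eq.
  by apply: e; apply/rcosetsP; exists y => //; apply: (subsetP sG1G).
- by move=> f f'; apply: Jeq_refl.
- by move=> g f Gg; apply: Jeq_ext => C _; rewrite /phi0 /Jact mulgA.
- move=> f f' [c e]; exists c => D /rcosetsP[x Gx ->].
  have [y Gy ->] := HG1_rep Gx.
  have := e (H1 :* y); rewrite /phi0 HC_eq; apply.
  by apply/rcosetsP; exists y.
- move=> f'; exists (fun D => f' (G1 :&: D)); apply: Jeq_ext => C /X1_repr[y Gy ->].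
  by rewrite /phi0 HC_eq G1_cap.
Qed.

End Main.


Section Part2.
Variable gT : finGroupType.
Variables G H G1 : {group gT}.
Hypothesis sHG : H \subset G.
Hypothesis sG1G : G1 \subset G.
Notation H1 := (G1 :&: H).
Notation elt := ({set gT} -> int).
Notation "f ~= f'" := (Jeq G H f f') (at level 70).
Notation "f ~1 f'" := (Jeq G1 H1 f f') (at level 70).

Variable phi : elt -> elt.
Hypothesis iso : Jiso G1 G H G1 H1 phi.

Lemma phi_resp f f' : f ~= f' -> phi f ~1 phi f'.
Proof. by case: iso => h _ _ _ _; apply: h. Qed.
Lemma phi_add f f' : phi (Jadd f f') ~1 Jadd (phi f) (phi f').
Proof. by case: iso => _ h _ _ _; apply: h. Qed.
Lemma phi_act g f : g \in G1 -> phi (Jact g f) ~1 Jact g (phi f).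
Proof. by case: iso => _ _ h _ _; apply: h. Qed.
Lemma phi_refl f f' : phi f ~1 phi f' -> f ~= f'.
Proof. by case: iso => _ _ _ h _; apply: h. Qed.
Lemma phi_surj f' : exists f, phi f ~1 f'.
Proof. by case: iso => _ _ _ _ h; apply: h. Qed.

Lemma phi_sub f f' : phi (Jsub f f') ~1 Jsub (phi f) (phi f').
Proof.
have a : phi f ~1 phi (Jadd (Jsub f f') f').
  by apply: phi_resp; apply: Jeq_ext => C _; rewrite /Jadd /Jsub subrK.
have b := phi_add (Jsub f f') f'.
move/JeqE: a => a; move/JeqE: b => b; apply/JeqE => C XC.
move: (a C XC) (b C XC); rewrite /Jsub /Jadd; gen2 phi; clia.
Qed.

Lemma phi_zero : phi (@Jzero gT) ~1 (@Jzero gT).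
Proof.
have a : phi (@Jzero gT) ~1 phi (Jadd (@Jzero gT) (@Jzero gT)).
  by apply: phi_resp; apply: Jeq_ext => C _; rewrite /Jadd /Jzero addr0.
have b := phi_add (@Jzero gT) (@Jzero gT).
move/JeqE: a => a; move/JeqE: b => b; apply/JeqE => C XC.
move: (a C XC) (b C XC); rewrite /Jadd /Jzero; gen2 phi; clia.
Qed.

Lemma phi_db g x1 x2 x3 : g \in G1 ->
  phi (Jadd (Jsub (Jact g x1) x2) x3) ~1 Jadd (Jsub (Jact g (phi x1)) (phi x2)) (phi x3).
Proof.
move=> Gg; apply: Jeq_trans (phi_add _ _) _; apply: Jeq_add (Jeq_refl _ _ _).
apply: Jeq_trans (phi_sub _ _) _; apply: Jeq_sub (Jeq_refl _ _ _).
exact: phi_act.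
Qed.

Lemma phi_dc g x1 x2 x3 x4 : g \in G1 ->
  phi (Jsub (Jadd (Jsub (Jact g x1) x2) x3) x4) ~1
  Jsub (Jadd (Jsub (Jact g (phi x1)) (phi x2)) (phi x3)) (phi x4).
Proof.
move=> Gg; apply: Jeq_trans (phi_sub _ _) _; apply: Jeq_sub (Jeq_refl _ _ _).
exact: phi_db.
Qed.

Variable c : cochain2 gT.
Hypothesis cc : cocycle2 G H G c.

Lemma res_cocycle : cocycle2 G1 H1 G1 (fun g h => phi (c g h)).
Proof.
move=> g h k Gg Gh Gk.
have sub := subsetP sG1G.
have e := phi_resp (cc (sub g Gg) (sub h Gh) (sub k Gk)).
apply: Jeq_trans (Jeq_sym (phi_dc _ _ _ _ Gg)) _.
exact: Jeq_trans e (phi_zero).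
Qed.

Lemma res_cob (Dg : {group gT}) : coboundary2 G H Dg c ->
  coboundary2 G1 H1 (Dg :&: G1) (fun g h => phi (c g h)).
Proof.
case=> b hb; exists (fun g => phi (b g)) => g h /setIP[Dg1 G1g] /setIP[Dh G1h].
apply: Jeq_trans (phi_resp (hb g h Dg1 Dh)) _.
exact: phi_db.
Qed.

Lemma res_inj : coboundary2 G1 H1 G1 (fun g h => phi (c g h)) -> coboundary2 G H G1 c.
Proof.
case=> b1 hb1.
pose b g := proj1_sig (constructive_indefinite_description _ (phi_surj (b1 g))).
have hb : forall g, phi (b g) ~1 b1 g :=
  fun g => proj2_sig (constructive_indefinite_description _ (phi_surj (b1 g))).
exists b => g h Gg Gh; apply: phi_refl.
apply: Jeq_trans (hb1 g h Gg Gh) _.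
apply: Jeq_trans (Jeq_sym (phi_db _ _ _ Gg)).
apply: Jeq_add; last exact: Jeq_sym.
apply: Jeq_sub; last exact: Jeq_sym.
apply: Jeq_act => //; exact: (Jeq_sym (hb h)).
Qed.

End Part2.

Section Combine.
Variable gT : finGroupType.
Variables G H G1 : {group gT}.
Hypothesis sHG : H \subset G.
Hypothesis sG1G : G1 \subset G.
Hypothesis cop : coprime #|G : G1| #|G : H|.
Variable c : cochain2 gT.
Hypothesis cc : cocycle2 G H G c.

Lemma inj_main : (forall s, s \in H -> coboundary2 G H <[s]> c) ->
  coboundary2 G H G1 c -> coboundary2 G H G c.
Proof.
move=> cyc [b1 hb1].
have [b2 hb2] := fixed_coboundary sHG cc cyc.
have [be1 h1] := Jtransfer sG1G cc hb1.
have [be2 h2] := Jtransfer sHG cc hb2.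
have [u [v Bez]] := Bezoutz #|G : G1|%:Z #|G : H|%:Z.
have Bez1 : (u * #|G : G1|%:Z + v * #|G : H|%:Z = 1)%R by rewrite Bez /gcdz /= (eqP cop).
set be := fun g C => (u * be1 g C + v * be2 g C)%R.
exists be => g h Gg Gh.
move/JeqE: (h1 g h Gg Gh) => e1; move/JeqE: (h2 g h Gg Gh) => e2; apply/JeqE => C XC.
have R : forall D, (c g h D - db be g h D =
   u * (Jscale #|G : G1|%:Z (c g h) D - db be1 g h D) +
   v * (Jscale #|G : H|%:Z (c g h) D - db be2 g h D))%R.
  move=> D; transitivity ((u * #|G : G1|%:Z + v * #|G : H|%:Z) * c g h D - db be g h D)%R.
    by rewrite Bez1 mul1r.
  rewrite /Jscale /db /be; ring.
change (c g h C - db be g h C = c g h H - db be g h H)%R.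
by rewrite !R (e1 C XC) (e2 C XC).
Qed.

End Combine.


Unset Implicit Arguments. Set Strict Implicit. Set Printing Implicit Defensive.

Theorem proposition3p12 (p k : nat) (n : nat) (G : {group {perm 'I_n}})
    (i : 'I_n) (D : {set {group {perm 'I_n}}}) (G1 : {group {perm 'I_n}}) :
  prime p -> n = (p ^ k)%N ->
  [transitive G, on [set: 'I_n] | 'P] ->
  admissible G D ->
  G1 \subset G ->
  (exists P : {group {perm 'I_n}}, p.-Sylow(G) P /\ P \subset G1) ->
  let H := 'C_G[i | 'P] in
  (* (i) *)
  (exists phi, Jiso G1 G H G1 (G1 :&: H) phi) /\
  (* (ii) for the G1-isomorphism phi of (i), Res_{G/G1} (composed with phi)
     maps Sha^2_D(G, J_{G/H}) into Sha^2_{D cap G1}(G1, J_{G1/(G1 cap H)})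
     and is injective *)
  (forall phi, Jiso G1 G H G1 (G1 :&: H) phi ->
     forall c : cochain2 _, sha2_cocycle G H D c ->
       let resc := fun g h => phi (c g h) in
       (cocycle2 G1 (G1 :&: H) G1 resc /\
        forall Dg : {group {perm 'I_n}}, Dg \in D ->
          coboundary2 G1 (G1 :&: H) (Dg :&: G1) resc) /\
       (coboundary2 G1 (G1 :&: H) G1 resc -> coboundary2 G H G c)).
Proof.
move=> pr hn tr adm sG1G [P [sylP sPG1]] H.
have sHG : H \subset G by apply: subsetIl.
have iGH : #|G : H| = n.
  by rewrite /H -card_orbit (atransP tr i (in_setT i)) cardsT card_ord.
have cop : coprime #|G : G1| #|G : H|.
  have h : p^'.-nat #|G : G1|.
    case/and3P: sylP => _ _ h; apply: pnat_dvd h.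
    by rewrite -(Lagrange_index sG1G sPG1) dvdn_mulr.
  have iGH' : #|G : H| = (p ^ k)%N by rewrite iGH.
  rewrite coprime_sym iGH'; apply: pnat_coprime h.
  by rewrite pnatX pnat_id.
have HG1 : H * G1 = G by apply: coprime_index_mulG; rewrite // coprime_sym.
split.
  by exists (phi0 H); apply: part1.
move=> phi iso c [cc cobD] resc; split; first split.
- exact: (res_cocycle sHG sG1G iso cc).
- by move=> Dg DgD; apply: (res_cob sHG sG1G iso); apply: cobD.
- move=> cob1.
  have cyc : forall s, s \in H -> coboundary2 G H <[s]> c.
    move=> s Hs; have Gs : s \in G by apply: (subsetP sHG).
    by case: adm => _ cycD _; apply: cobD (cycD s Gs).
  have c1 := res_inj sHG sG1G iso cob1.
  have HH : H = 'C_G[i | 'P]%G by [].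
  exact: (@inj_main _ G 'C_G[i | 'P]%G G1 sHG sG1G cop c cc cyc c1).
Qed.
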